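(* Let $k\geq2$, let $X$ be a quasi-Polish space and let $\theta\geq1$ be a countable ordinal. Then $$\bigcup\{\mathbf{\Sigma}^0_\theta(X,F)\mid F\text{ a countable }k\text{-forest}\}=(\mathbf{\Delta}^0_{\theta+1}(X))_k.$$
   Context: $P\omega$ is the set of subsets of $\omega$ with the Scott topology (basic open sets $\{A\subseteq\omega\mid F\subseteq A\}$, $F$ finite). A space is quasi-Polish (in the sense of de Brecht) iff it is homeomorphic to a $\mathbf{\Pi}^0_2$-subset of $P\omega$ with the induced topology. For a space $Y$: $\mathbf{\Sigma}^0_1(Y)$ the open sets; $\mathbf{\Sigma}^0_2(Y)$ the countable unions of sets $U\setminus V$ with $U,V$ open; for $2<\alpha<\omega_1$, $\mathbf{\Sigma}^0_\alpha(Y)$ the countable unions of complements of sets in $\bigcup_{\beta<\alpha}\mathbf{\Sigma}^0_\beta(Y)$ (with $\mathbf{\Sigma}^0_0(Y)=\{\emptyset\}$); $\mathbf{\Pi}^0_\alpha$ the complements; $\mathbf{\Delta}^0_\alpha=\mathbf{\Sigma}^0_\alpha\cap\mathbf{\Pi}^0_\alpha$. A $k$-partition of $X$ is a function $A:X\to k=\{0,\dots,k-1\}$; $(\mathbf{\Delta}^0_{\theta+1}(X))_k$ is the set of $k$-partitions $A$ with $A^{-1}(i)\in\mathbf{\Delta}^0_{\theta+1}(X)$ for all $i<k$. A countable $k$-forest is a countable poset $(P;\leq)$ without infinite chains in which every upper cone $\{y\mid x\leq y\}$ is a chain, with a labeling $c:P\to k$. $\mathbf{\Sigma}^0_\theta(X,F)$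 is the set of $k$-partitions $A:X\to k$ for which there exist $B_p\in\mathbf{\Sigma}^0_\theta(X)$ ($p\in F$) with $\bigcup_pB_p=X$ and $A^{-1}(i)=\bigcup\{B_p\setminus\bigcup_{q<p}B_q\mid c(p)=i\}$ for each $i<k$. *)

(* Defs.v *)
From Stdlib Require Import List Arith.

Definition Pomega := nat -> Prop.

Definition scott_open (W : Pomega -> Prop) : Prop :=
  forall A, W A -> exists F : list nat,
    (forall n, In n F -> A n) /\
    (forall B : Pomega, (forall n, In n F -> B n) -> W B).

Definition Sigma02 {T : Type} (opn : (T -> Prop) -> Prop) (A : T -> Prop) : Prop :=
  exists U V : nat -> T -> Prop,
    (forall n, opn (U n)) /\ (forall n, opn (V n)) /\
    (forall x, A x <-> exists n, U n x /\ ~ V n x).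

Definition Pi02 {T : Type} (opn : (T -> Prop) -> Prop) (A : T -> Prop) : Prop :=
  Sigma02 opn (fun x => ~ A x).

Definition quasi_polish {X : Type} (opn : (X -> Prop) -> Prop) : Prop :=
  exists (S : Pomega -> Prop) (f : X -> Pomega),
    Pi02 scott_open S /\
    (forall x, S (f x)) /\
    (forall x y, f x = f y -> x = y) /\
    (forall A, S A -> exists x, f x = A) /\
    (forall U : X -> Prop,
        opn U <-> exists W, scott_open W /\ (forall x, U x <-> W (f x))).

(** * Countable ordinals
    A countable ordinal is represented by an element [a] of a well-ordering
    [R] of nat (strict, total, well-founded); the ordinal denoted is the order
    type of the initial segment {b | R b a}. Every countable ordinal arises. *)
Definition nat_wellorder (R : nat -> nat -> Prop) : Prop :=
  (forall a, ~ R a a) /\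
  (forall a b c, R a b -> R b c -> R a c) /\
  (forall a b, a <> b -> R a b \/ R b a) /\
  well_founded R.

Definition ord_is0 (R : nat -> nat -> Prop) (a : nat) : Prop :=
  forall b, ~ R b a.
Definition ord_is1 (R : nat -> nat -> Prop) (a : nat) : Prop :=
  exists b, R b a /\ forall c, R c a -> c = b.
Definition ord_is2 (R : nat -> nat -> Prop) (a : nat) : Prop :=
  exists b1 b2, b1 <> b2 /\ R b1 a /\ R b2 a /\
    forall c, R c a -> c = b1 \/ c = b2.
Definition ord_gt2 (R : nat -> nat -> Prop) (a : nat) : Prop :=
  exists b1 b2 b3, b1 <> b2 /\ b1 <> b3 /\ b2 <> b3 /\
    R b1 a /\ R b2 a /\ R b3 a.

Definition ord_succ (R : nat -> nat -> Prop) (a b : nat) : Prop :=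
  R a b /\ forall c, R c b -> c = a \/ R c a.

Inductive Sigma0 {T : Type} (opn : (T -> Prop) -> Prop)
    (R : nat -> nat -> Prop) : nat -> (T -> Prop) -> Prop :=
| Sigma0_zero a A :
    ord_is0 R a -> (forall x, ~ A x) -> Sigma0 opn R a A
| Sigma0_one a A :
    ord_is1 R a -> opn A -> Sigma0 opn R a A
| Sigma0_two a A :
    ord_is2 R a -> Sigma02 opn A -> Sigma0 opn R a A
| Sigma0_gt2 a A (B : nat -> T -> Prop) :
    ord_gt2 R a ->
    (forall n, exists b, R b a /\ Sigma0 opn R b (B n)) ->
    (forall x, A x <-> exists n, ~ B n x) ->
    Sigma0 opn R a A.

Definition Delta0 {T : Type} (opn : (T -> Prop) -> Prop)
    (R : nat -> nat -> Prop) (a : nat) (A : T -> Prop) : Prop :=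
  Sigma0 opn R a A /\ Sigma0 opn R a (fun x => ~ A x).

Definition kpartition {X : Type} (k : nat) (A : X -> nat) : Prop :=
  forall x, A x < k.

Definition Delta0_k {X : Type} (opn : (X -> Prop) -> Prop)
    (R : nat -> nat -> Prop) (a k : nat) (A : X -> nat) : Prop :=
  kpartition k A /\
  forall i, i < k -> Delta0 opn R a (fun x => A x = i).

Definition countable_kforest (k : nat) (P : Type) (le : P -> P -> Prop)
    (c : P -> nat) : Prop :=
  (forall p, le p p) /\
  (forall p q, le p q -> le q p -> p = q) /\
  (forall p q r, le p q -> le q r -> le p r) /\
  (exists e : P -> nat, forall p q, e p = e q -> p = q) /\
  (forall C : P -> Prop,
      (forall p q, C p -> C q -> le p q \/ le q p) ->
      exists l : list P, forall p, C p -> In p l) /\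
  (forall x y z, le x y -> le x z -> le y z \/ le z y) /\
  (forall p, c p < k).

Definition Sigma0_forest {X : Type} (opn : (X -> Prop) -> Prop)
    (R : nat -> nat -> Prop) (a k : nat)
    (P : Type) (le : P -> P -> Prop) (c : P -> nat) (A : X -> nat) : Prop :=
  kpartition k A /\
  exists B : P -> X -> Prop,
    (forall p, Sigma0 opn R a (B p)) /\
    (forall x, exists p, B p x) /\
    (forall i, i < k -> forall x,
        A x = i <->
        exists p, c p = i /\ B p x /\
          (forall q, le q p -> q <> p -> ~ B q x)).

(* Main.v *)
Require Import Defs.
From Stdlib Require Import List Arith Lia Classical IndefiniteDescription
  FunctionalExtensionality PropExtensionality Cantor.

Definition pr (a b : nat) : nat := Cantor.to_nat (a, b).
Definition p1 (n : nat) : nat := fst (Cantor.of_nat n).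
Definition p2 (n : nat) : nat := snd (Cantor.of_nat n).
Lemma p1_pr a b : p1 (pr a b) = a.
Proof. unfold p1, pr. now rewrite Cantor.cancel_of_to. Qed.
Lemma p2_pr a b : p2 (pr a b) = b.
Proof. unfold p2, pr. now rewrite Cantor.cancel_of_to. Qed.
Lemma pr_p n : pr (p1 n) (p2 n) = n.
Proof. unfold p1, p2, pr. rewrite <- surjective_pairing. apply Cantor.cancel_to_of. Qed.

Lemma choice_nat {A : Type} (P : nat -> A -> Prop) :
  (forall n, exists a, P n a) -> exists f : nat -> A, forall n, P n (f n).
Proof. apply functional_choice. Qed.

Lemma choice_gen {B A : Type} (P : B -> A -> Prop) :
  (forall n, exists a, P n a) -> exists f : B -> A, forall n, P n (f n).
Proof. apply functional_choice. Qed.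

Lemma pred_ext {T : Type} (P Q : T -> Prop) : (forall x, P x <-> Q x) -> P = Q.
Proof. intro H. apply functional_extensionality; intro x. apply propositional_extensionality; auto. Qed.

Definition OPS {T : Type} (opn : (T -> Prop) -> Prop) : Prop :=
  (forall U V, opn U -> opn V -> opn (fun x => U x /\ V x)) /\
  (forall U : nat -> T -> Prop, (forall n, opn (U n)) -> opn (fun x => exists n, U n x)) /\
  opn (fun _ => True) /\ opn (fun _ => False) /\
  (forall U V, (forall x, U x <-> V x) -> opn U -> opn V).

Section S2.
Context {T : Type} (opn : (T -> Prop) -> Prop) (Hop : OPS opn).

Lemma op_and U V : opn U -> opn V -> opn (fun x => U x /\ V x).
Proof. apply Hop. Qed.
Lemma op_ex (U : nat -> T -> Prop) : (forall n, opn (U n)) -> opn (fun x => exists n, U n x).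
Proof. apply Hop. Qed.
Lemma op_full : opn (fun _ => True).
Proof. apply Hop. Qed.
Lemma op_empty : opn (fun _ => False).
Proof. apply Hop. Qed.
Lemma op_ext U V : (forall x, U x <-> V x) -> opn U -> opn V.
Proof. apply Hop. Qed.
Lemma op_or U V : opn U -> opn V -> opn (fun x => U x \/ V x).
Proof.
  intros HU HV. apply (op_ext (fun x => exists n, (fun n => match n with 0 => U | _ => V end) n x)).
  - intro x. split. intros [[|n] H]; auto. intros [H|H]; [exists 0|exists 1]; auto.
  - apply op_ex. intros [|n]; auto.
Qed.

Lemma s2_ext A B : (forall x, A x <-> B x) -> Sigma02 opn A -> Sigma02 opn B.
Proof.
  intros H [U [V [HU [HV HA]]]]. exists U, V. repeat split; auto.
  - intro; apply HA, H; auto.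
  - intro; apply H, HA; auto.
Qed.

Lemma s2_ex (A : nat -> T -> Prop) : (forall n, Sigma02 opn (A n)) ->
  Sigma02 opn (fun x => exists n, A n x).
Proof.
  intro H.
  assert (H' : forall n, exists UV : (nat -> T -> Prop) * (nat -> T -> Prop),
    (forall m, opn (fst UV m)) /\ (forall m, opn (snd UV m)) /\
    (forall x, A n x <-> exists m, fst UV m x /\ ~ snd UV m x)).
  { intro n. destruct (H n) as [U [V HH]]. exists (U, V). exact HH. }
  apply choice_nat in H' as [UV HUV].
  exists (fun m => fst (UV (p1 m)) (p2 m)), (fun m => snd (UV (p1 m)) (p2 m)).
  split; [|split].
  - intro m. apply HUV.
  - intro m. apply HUV.
  - intro x. split.
    + intros [n Hn]. apply HUV in Hn as [m Hm]. exists (pr n m).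
      rewrite p1_pr, p2_pr. exact Hm.
    + intros [m Hm]. exists (p1 m). apply HUV. exists (p2 m). exact Hm.
Qed.

Lemma s2_or A B : Sigma02 opn A -> Sigma02 opn B -> Sigma02 opn (fun x => A x \/ B x).
Proof.
  intros HA HB. apply (s2_ext (fun x => exists n, (fun n => match n with 0 => A | _ => B end) n x)).
  - intro x. split. intros [[|n] H]; auto. intros [H|H]; [exists 0|exists 1]; auto.
  - apply s2_ex. intros [|n]; auto.
Qed.

Lemma s2_open U : opn U -> Sigma02 opn U.
Proof.
  intro H. exists (fun _ => U), (fun _ => fun _ => False). split; [|split]; auto using op_empty.
  intro x. split. intro; exists 0; auto. intros [_ [h _]]; auto.
Qed.

Lemma s2_copen U : opn U -> Sigma02 opn (fun x => ~ U x).
Proof.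
  intro H. exists (fun _ => fun _ => True), (fun _ => U). split; [|split]; auto using op_full.
  intro x. split. intro; exists 0; auto. intros [_ [_ h]]; auto.
Qed.

Lemma s2_diff U V : opn U -> opn V -> Sigma02 opn (fun x => U x /\ ~ V x).
Proof.
  intros HU HV. exists (fun _ => U), (fun _ => V). split; [|split]; auto.
  intro x. split. intro; exists 0; auto. intros [_ h]; auto.
Qed.

Lemma s2_empty : Sigma02 opn (fun _ => False).
Proof. apply s2_open, op_empty. Qed.
Lemma s2_full : Sigma02 opn (fun _ => True).
Proof. apply s2_open, op_full. Qed.

Lemma s2_and_open A O : Sigma02 opn A -> opn O -> Sigma02 opn (fun x => A x /\ O x).
Proof.
  intros [U [V [HU [HV HA]]]] HO. exists (fun m x => U m x /\ O x), V.
  split; [|split]; auto. intro m; apply op_and; auto.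
  intro x. rewrite HA. firstorder.
Qed.

Lemma s2_and_nopen A O : Sigma02 opn A -> opn O -> Sigma02 opn (fun x => A x /\ ~ O x).
Proof.
  intros [U [V [HU [HV HA]]]] HO. exists U, (fun m x => V m x \/ O x).
  split; [|split]; auto. intro m; apply op_or; auto.
  intro x. rewrite HA. firstorder.
Qed.

Lemma s2_and A B : Sigma02 opn A -> Sigma02 opn B -> Sigma02 opn (fun x => A x /\ B x).
Proof.
  intros [U [V [HU [HV HA]]]] [U' [V' [HU' [HV' HB]]]].
  exists (fun m x => U (p1 m) x /\ U' (p2 m) x), (fun m x => V (p1 m) x \/ V' (p2 m) x).
  split; [|split].
  - intro; apply op_and; auto.
  - intro; apply op_or; auto.
  - intro x. rewrite HA, HB. split.
    + intros [[n Hn] [m Hm]]. exists (pr n m). rewrite p1_pr, p2_pr. tauto.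
    + intros [m Hm]. split; [exists (p1 m)|exists (p2 m)]; tauto.
Qed.

Lemma pi2_all (A : nat -> T -> Prop) : (forall n, Pi02 opn (A n)) ->
  Pi02 opn (fun x => forall n, A n x).
Proof.
  intro H. unfold Pi02. apply (s2_ext (fun x => exists n, ~ A n x)).
  - intro x. split. intros [n Hn] H'. auto. intro H'. apply not_all_ex_not; auto.
  - apply s2_ex. exact H.
Qed.

Lemma pi2_and A B : Pi02 opn A -> Pi02 opn B -> Pi02 opn (fun x => A x /\ B x).
Proof.
  intros HA HB. unfold Pi02. apply (s2_ext (fun x => ~ A x \/ ~ B x)).
  - intro x. tauto.
  - apply s2_or; auto.
Qed.

Lemma pi2_ext A B : (forall x, A x <-> B x) -> Pi02 opn A -> Pi02 opn B.
Proof. intros H. apply s2_ext. intro x. rewrite H. tauto. Qed.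

End S2.

Definition upF (E : list nat) (y : Pomega) : Prop := forall n, In n E -> y n.

Lemma so_up W A B : scott_open W -> W A -> (forall n, A n -> B n) -> W B.
Proof.
  intros HW HA HAB. destruct (HW A HA) as [F [HF1 HF2]]. apply HF2. intros n Hn. auto.
Qed.

Lemma so_ops : OPS scott_open.
Proof.
  split; [|split; [|split; [|split]]].
  - intros U V HU HV A [HA1 HA2].
    destruct (HU A HA1) as [F [HF1 HF2]]. destruct (HV A HA2) as [G [HG1 HG2]].
    exists (F ++ G). split.
    + intros n Hn. apply in_app_or in Hn as [Hn|Hn]; auto.
    + intros B HB. split; [apply HF2|apply HG2]; intros n Hn; apply HB; apply in_or_app; auto.
  - intros U HU A [n Hn]. destruct (HU n A Hn) as [F [HF1 HF2]]. exists F. split; auto.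
    intros B HB. exists n. auto.
  - intros A _. exists nil. split. intros n []. auto.
  - intros A [].
  - intros U V H HU A HA. apply H in HA. destruct (HU A HA) as [F [HF1 HF2]].
    exists F. split; auto. intros B HB. apply H. auto.
Qed.

Lemma so_upF E : scott_open (upF E).
Proof.
  intros A HA. exists E. split; auto.
Qed.

Lemma so_atom n : scott_open (fun y : Pomega => y n).
Proof.
  intros A HA. exists (n :: nil). split. intros m [<-|[]]; auto.
  intros B HB. apply HB. left; auto.
Qed.

Lemma so_reidx (g : nat -> nat) W : scott_open W ->
  scott_open (fun y : Pomega => W (fun m => y (g m))).
Proof.
  intros HW A HA. destruct (HW _ HA) as [F [HF1 HF2]]. exists (map g F). split.
  - intros n Hn. apply in_map_iff in Hn as [m [<- Hm]]. auto.
  - intros B HB. apply HF2. intros m Hm. apply HB. apply in_map; auto.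
Qed.

Lemma s2_reidx (g : nat -> nat) Z : Sigma02 scott_open Z ->
  Sigma02 scott_open (fun y : Pomega => Z (fun m => y (g m))).
Proof.
  intros [U [V [HU [HV HZ]]]].
  exists (fun n y => U n (fun m => y (g m))), (fun n y => V n (fun m => y (g m))).
  split; [|split]; try (intro; apply so_reidx; auto).
  intro y. apply HZ.
Qed.

Lemma pi2_reidx (g : nat -> nat) Z : Pi02 scott_open Z ->
  Pi02 scott_open (fun y : Pomega => Z (fun m => y (g m))).
Proof. intro H. unfold Pi02. apply (s2_reidx g (fun y => ~ Z y)). exact H. Qed.


Section Lvl.
Variable R : nat -> nat -> Prop.
Hypothesis HR : nat_wellorder R.

Lemma R_irr a : ~ R a a. Proof. apply HR. Qed.
Lemma R_tr a b c : R a b -> R b c -> R a c. Proof. apply HR. Qed.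
Lemma R_tot a b : a <> b -> R a b \/ R b a. Proof. apply HR. Qed.
Lemma R_wf : well_founded R. Proof. apply HR. Qed.

Lemma wf_min (Q : nat -> Prop) : (exists x, Q x) -> exists c, Q c /\ forall d, R d c -> ~ Q d.
Proof.
  intros [x Hx]. revert Hx. induction x as [x IH] using (well_founded_ind R_wf).
  intro Hx. destruct (classic (exists d, R d x /\ Q d)) as [[d [Hd1 Hd2]]|Hn].
  - exact (IH d Hd1 Hd2).
  - exists x. split; auto. intros d Hd HQ. apply Hn; eauto.
Qed.

Lemma lvl_cases a : ord_is0 R a \/ ord_is1 R a \/ ord_is2 R a \/ ord_gt2 R a.
Proof.
  destruct (classic (ord_is0 R a)) as [H|H]; [auto|].
  unfold ord_is0 in H. apply not_all_ex_not in H as [b1 Hb1]. apply NNPP in Hb1.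
  destruct (classic (forall c, R c a -> c = b1)) as [H1|H1].
  { right; left. exists b1; auto. }
  apply not_all_ex_not in H1 as [b2 Hb2].
  apply imply_to_and in Hb2 as [Hb2 Hne].
  destruct (classic (forall c, R c a -> c = b1 \/ c = b2)) as [H2|H2].
  { right; right; left. exists b1, b2. repeat split; auto. }
  apply not_all_ex_not in H2 as [b3 Hb3].
  apply imply_to_and in Hb3 as [Hb3 Hne3].
  right; right; right. exists b1, b2, b3. repeat split; auto; intro; subst; tauto.
Qed.

Lemma is0_is1 a : ord_is0 R a -> ord_is1 R a -> False.
Proof. intros H [b [Hb _]]. exact (H b Hb). Qed.
Lemma is0_is2 a : ord_is0 R a -> ord_is2 R a -> False.
Proof. intros H [b [_ [_ [Hb _]]]]. exact (H b Hb). Qed.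
Lemma is0_gt2 a : ord_is0 R a -> ord_gt2 R a -> False.
Proof. intros H [b [_ [_ [_ [_ [_ [Hb _]]]]]]]. exact (H b Hb). Qed.
Lemma is1_is2 a : ord_is1 R a -> ord_is2 R a -> False.
Proof.
  intros [b [Hb Hu]] [b1 [b2 [Hne [H1 [H2 _]]]]]. apply Hne. rewrite (Hu _ H1), (Hu _ H2). auto.
Qed.
Lemma is1_gt2 a : ord_is1 R a -> ord_gt2 R a -> False.
Proof.
  intros [b [Hb Hu]] [b1 [b2 [b3 [Hne [_ [_ [H1 [H2 _]]]]]]]].
  apply Hne. rewrite (Hu _ H1), (Hu _ H2). auto.
Qed.
Lemma is2_gt2 a : ord_is2 R a -> ord_gt2 R a -> False.
Proof.
  intros [c1 [c2 [_ [_ [_ Hu]]]]] [b1 [b2 [b3 [H12 [H13 [H23 [H1 [H2 H3]]]]]]]].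
  destruct (Hu _ H1), (Hu _ H2), (Hu _ H3); subst; tauto.
Qed.

Lemma is1_pred b a : ord_is1 R b -> R a b -> ord_is0 R a.
Proof.
  intros [b0 [Hb0 Hu]] Hab c Hc. pose proof (Hu _ Hab); subst.
  pose proof (Hu _ (R_tr _ _ _ Hc Hab)); subst. exact (R_irr _ Hc).
Qed.

Lemma is2_pred b a : ord_is2 R b -> R a b -> ord_is0 R a \/ ord_is1 R a.
Proof.
  intros Hb Hab. destruct (lvl_cases a) as [H|[H|[H|H]]]; auto; exfalso.
  - destruct H as [c1 [c2 [Hne [H1 [H2 _]]]]]. apply (is2_gt2 b); auto.
    exists c1, c2, a. repeat split; eauto using R_tr; intro; subst; eapply R_irr; eauto.
  - destruct H as [c1 [c2 [c3 [H12 [H13 [H23 [H1 [H2 H3]]]]]]]]. apply (is2_gt2 b); auto.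
    exists c1, c2, a. repeat split; eauto using R_tr; intro; subst; eapply R_irr; eauto.
Qed.

Lemma is2_has1 b : ord_is2 R b -> exists c, ord_is1 R c /\ R c b.
Proof.
  intros Hb. destruct Hb as [b1 [b2 [Hne [H1 [H2 Hu]]]]].
  destruct (R_tot _ _ Hne) as [H|H].
  - exists b2. split; auto. exists b1. split; auto. intros c Hc.
    destruct (Hu c (R_tr _ _ _ Hc H2)); subst; auto. exfalso; eapply R_irr; eauto.
  - exists b1. split; auto. exists b2. split; auto. intros c Hc.
    destruct (Hu c (R_tr _ _ _ Hc H1)); subst; auto. exfalso; eapply R_irr; eauto.
Qed.

Lemma three_max b1 b2 b3 : b1 <> b2 -> b1 <> b3 -> b2 <> b3 ->
  exists m d1 d2, d1 <> d2 /\ R d1 m /\ R d2 m /\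
   (m = b1 \/ m = b2 \/ m = b3).
Proof.
  intros H12 H13 H23.
  destruct (R_tot _ _ H12) as [A|A]; destruct (R_tot _ _ H13) as [B|B];
  destruct (R_tot _ _ H23) as [C|C].
  all: first
   [ exists b3, b1, b2; repeat split; auto; eauto using R_tr; fail
   | exists b2, b1, b3; repeat split; auto; eauto using R_tr; fail
   | exists b1, b2, b3; repeat split; auto; eauto using R_tr; fail
   | exfalso; eapply R_irr; eauto using R_tr ].
Qed.

Lemma gt2_has2 b : ord_gt2 R b -> exists c, ord_is2 R c /\ R c b.
Proof.
  intros Hb.
  set (Q := fun d => R d b /\ exists d1 d2, d1 <> d2 /\ R d1 d /\ R d2 d).
  assert (HQ : exists d, Q d).
  { destruct Hb as [b1 [b2 [b3 [H12 [H13 [H23 [H1 [H2 H3]]]]]]]].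
    destruct (three_max _ _ _ H12 H13 H23) as [m [d1 [d2 [Hn [Hd1 [Hd2 Hm]]]]]].
    exists m. split. destruct Hm as [->|[->| ->]]; auto. eauto. }
  destruct (wf_min Q HQ) as [c [[Hcb [d1 [d2 [Hn [Hd1 Hd2]]]]] Hmin]].
  exists c. split; auto. exists d1, d2. repeat split; auto.
  intros e He. destruct (classic (e = d1 \/ e = d2)) as [H|H]; auto. exfalso.
  apply not_or_and in H as [He1 He2].
  destruct (three_max _ _ _ Hn (not_eq_sym He1) (not_eq_sym He2)) as [m [f1 [f2 [Hf [Hf1 [Hf2 Hm]]]]]].
  assert (Hmc : R m c) by (destruct Hm as [->|[->| ->]]; auto).
  apply (Hmin m Hmc). split. eauto using R_tr. eauto.
Qed.

Lemma not0_pred a : ~ ord_is0 R a -> exists b, R b a.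
Proof.
  intro H. unfold ord_is0 in H. apply not_all_ex_not in H as [b Hb]. apply NNPP in Hb. eauto.
Qed.

End Lvl.


Section Bor.
Variable X : Type.
Variable opn : (X -> Prop) -> Prop.
Hypothesis Hop : OPS opn.
Variable R : nat -> nat -> Prop.
Hypothesis HR : nat_wellorder R.

Notation Sg := (Sigma0 opn R).

Lemma sg_ext a A B : (forall x, A x <-> B x) -> Sg a A -> Sg a B.
Proof. intros H HA. rewrite <- (pred_ext A B H). exact HA. Qed.

Lemma inv0 a A : ord_is0 R a -> Sg a A -> forall x, ~ A x.
Proof.
  intros Ha HA. inversion HA; subst; auto; exfalso.
  - eapply is0_is1; eauto.
  - eapply is0_is2; eauto.
  - eapply is0_gt2; eauto.
Qed.
Lemma inv1 a A : ord_is1 R a -> Sg a A -> opn A.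
Proof.
  intros Ha HA. inversion HA; subst; auto; exfalso.
  - eapply is0_is1; eauto.
  - eapply is1_is2; eauto.
  - eapply is1_gt2; eauto.
Qed.
Lemma inv2 a A : ord_is2 R a -> Sg a A -> Sigma02 opn A.
Proof.
  intros Ha HA. inversion HA; subst; auto; exfalso.
  - eapply is0_is2; eauto.
  - eapply is1_is2; eauto.
  - eapply is2_gt2; eauto.
Qed.
Lemma invg a A : ord_gt2 R a -> Sg a A -> exists B : nat -> X -> Prop,
  (forall n, exists b, R b a /\ Sg b (B n)) /\ (forall x, A x <-> exists n, ~ B n x).
Proof.
  intros Ha HA. inversion HA; subst; eauto; exfalso.
  - eapply is0_gt2; eauto.
  - eapply is1_gt2; eauto.
  - eapply is2_gt2; eauto.
Qed.

Lemma sg_gt2_closed c a U : ord_is2 R c -> R c a -> ord_gt2 R a -> opn U -> Sg a U.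
Proof.
  intros Hc Hca Ha HU. apply (Sigma0_gt2 _ _ a U (fun _ x => ~ U x)); auto.
  - intro n. exists c. split; auto. apply Sigma0_two; auto. apply s2_copen; auto.
  - intro x. split. intro; exists 0; tauto. intros [_ H]; apply NNPP; auto.
Qed.

Lemma sg_empty a : Sg a (fun _ => False).
Proof.
  destruct (lvl_cases R a) as [H|[H|[H|H]]].
  - apply Sigma0_zero; auto.
  - apply Sigma0_one; auto. apply op_empty; auto.
  - apply Sigma0_two; auto. apply s2_empty; auto.
  - destruct (gt2_has2 R HR a H) as [c [Hc Hca]].
    apply (Sigma0_gt2 _ _ a _ (fun _ _ => True)); auto.
    + intro n. exists c. split; auto. apply Sigma0_two; auto. apply s2_full; auto.
    + intro x. split. tauto. intros [_ H']; auto.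
Qed.

Lemma sg_open a U : ~ ord_is0 R a -> opn U -> Sg a U.
Proof.
  intros Ha HU. destruct (lvl_cases R a) as [H|[H|[H|H]]].
  - tauto.
  - apply Sigma0_one; auto.
  - apply Sigma0_two; auto. apply s2_open; auto.
  - destruct (gt2_has2 R HR a H) as [c [Hc Hca]]. eapply sg_gt2_closed; eauto.
Qed.

Lemma sg_full a : ~ ord_is0 R a -> Sg a (fun _ => True).
Proof. intro; apply sg_open; auto. apply op_full; auto. Qed.

Lemma sg_mono a b A : R a b -> Sg a A -> Sg b A.
Proof.
  intros Hab HA. destruct (lvl_cases R b) as [Hb|[Hb|[Hb|Hb]]].
  - exfalso; exact (Hb a Hab).
  - pose proof (is1_pred R HR _ _ Hb Hab) as Ha. pose proof (inv0 _ _ Ha HA).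
    apply sg_ext with (fun _ => False). intro x; split; try tauto. apply H.
    apply sg_empty.
  - destruct (is2_pred R HR _ _ Hb Hab) as [Ha|Ha].
    + pose proof (inv0 _ _ Ha HA).
      apply sg_ext with (fun _ => False). intro x; split; try tauto. apply H. apply sg_empty.
    + apply Sigma0_two; auto. apply s2_open; auto. eapply inv1; eauto.
  - destruct (lvl_cases R a) as [Ha|[Ha|[Ha|Ha]]].
    + pose proof (inv0 _ _ Ha HA).
      apply sg_ext with (fun _ => False). intro x; split; try tauto. apply H. apply sg_empty.
    + destruct (gt2_has2 R HR b Hb) as [c [Hc Hcb]]. eapply sg_gt2_closed; eauto.
      eapply inv1; eauto.
    + destruct (inv2 _ _ Ha HA) as [U [V [HU [HV HAe]]]].
      apply (Sigma0_gt2 _ _ b A (fun n x => ~ U n x \/ V n x)); auto.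
      * intro n. exists a. split; auto. apply Sigma0_two; auto.
        apply s2_or; auto. apply s2_copen; auto. apply s2_open; auto.
      * intro x. rewrite HAe. split.
        -- intros [n Hn]. exists n. tauto.
        -- intros [n Hn]. exists n. apply not_or_and in Hn. split; [apply NNPP|]; tauto.
    + destruct (invg _ _ Ha HA) as [B [HB HAe]].
      apply (Sigma0_gt2 _ _ b A B); auto.
      intro n. destruct (HB n) as [c [Hc HBc]]. exists c. split; auto. eapply R_tr; eauto.
Qed.

Lemma sg_compl a b A : R a b -> Sg a A -> Sg b (fun x => ~ A x).
Proof.
  intros Hab HA. destruct (lvl_cases R b) as [Hb|[Hb|[Hb|Hb]]].
  - exfalso; exact (Hb a Hab).
  - pose proof (is1_pred R HR _ _ Hb Hab) as Ha. pose proof (inv0 _ _ Ha HA).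
    apply sg_ext with (fun _ => True). intro x; split; auto.
    apply sg_full. intro H0. exact (H0 a Hab).
  - destruct (is2_pred R HR _ _ Hb Hab) as [Ha|Ha].
    + pose proof (inv0 _ _ Ha HA).
      apply sg_ext with (fun _ => True). intro x; split; auto.
      apply sg_full. intro H0. exact (H0 a Hab).
    + apply Sigma0_two; auto. apply s2_copen; auto. eapply inv1; eauto.
  - apply (Sigma0_gt2 _ _ b _ (fun _ => A)); auto.
    + intro; eauto.
    + intro x. split. intro; exists 0; auto. intros [_ H]; auto.
Qed.

Lemma sg_ex a (A : nat -> X -> Prop) : (forall n, Sg a (A n)) -> Sg a (fun x => exists n, A n x).
Proof.
  intros HA. destruct (lvl_cases R a) as [Ha|[Ha|[Ha|Ha]]].
  - apply Sigma0_zero; auto. intros x [n Hn]. eapply inv0; eauto.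
  - apply Sigma0_one; auto. apply op_ex; auto. intro n; eapply inv1; eauto.
  - apply Sigma0_two; auto. apply s2_ex; auto. intro n; eapply inv2; eauto.
  - assert (H : forall n, exists B : nat -> X -> Prop,
      (forall m, exists b, R b a /\ Sg b (B m)) /\ (forall x, A n x <-> exists m, ~ B m x)).
    { intro n. apply invg; auto. }
    apply choice_nat in H as [B HB].
    apply (Sigma0_gt2 _ _ a _ (fun m => B (p1 m) (p2 m))); auto.
    + intro m. apply HB.
    + intro x. split.
      * intros [n Hn]. apply HB in Hn as [m Hm]. exists (pr n m). rewrite p1_pr, p2_pr. auto.
      * intros [m Hm]. exists (p1 m). apply HB. eauto.
Qed.

Lemma sg_or a A B : Sg a A -> Sg a B -> Sg a (fun x => A x \/ B x).
Proof.
  intros HA HB. apply (sg_ext a (fun x => exists n, (fun n => match n with 0 => A | _ => B end) n x)).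
  - intro x. split. intros [[|n] H]; auto. intros [H|H]; [exists 0|exists 1]; auto.
  - apply sg_ex. intros [|n]; auto.
Qed.

Lemma sg_le a b A : (a = b \/ R a b) -> Sg a A -> Sg b A.
Proof. intros [->|H]; auto. apply sg_mono; auto. Qed.

Lemma sg_and a A B : Sg a A -> Sg a B -> Sg a (fun x => A x /\ B x).
Proof.
  intros HA HB. destruct (lvl_cases R a) as [Ha|[Ha|[Ha|Ha]]].
  - apply Sigma0_zero; auto. intros x [H _]. exact (inv0 a A Ha HA x H).
  - apply Sigma0_one; auto. apply op_and; auto; eapply inv1; eauto.
  - apply Sigma0_two; auto. apply s2_and; auto; eapply inv2; eauto.
  - destruct (invg _ _ Ha HA) as [C [HC HAe]]. destruct (invg _ _ Ha HB) as [D [HD HBe]].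
    apply (Sigma0_gt2 _ _ a _ (fun m x => C (p1 m) x \/ D (p2 m) x)); auto.
    + intro m. destruct (HC (p1 m)) as [c [Hc HCc]]. destruct (HD (p2 m)) as [d [Hd HDd]].
      destruct (classic (c = d)) as [->|Hne].
      * exists d. split; auto. apply sg_or; auto.
      * destruct (R_tot R HR _ _ Hne) as [H|H].
        -- exists d. split; auto. apply sg_or; auto. eapply sg_mono; eauto.
        -- exists c. split; auto. apply sg_or; auto. eapply sg_mono; eauto.
    + intro x. rewrite HAe, HBe. split.
      * intros [[n Hn] [m Hm]]. exists (pr n m). rewrite p1_pr, p2_pr. tauto.
      * intros [m Hm]. apply not_or_and in Hm. split; [exists (p1 m)|exists (p2 m)]; tauto.
Qed.

End Bor.


Lemma parity m : (exists k, m = 2 * k) \/ (exists k, m = 2 * k + 1).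
Proof.
  rewrite (Nat.div2_odd m). destruct (Nat.odd m); simpl; [right|left]; exists (Nat.div2 m); lia.
Qed.

Definition sel {A : Type} (a b : nat -> A) (m : nat) : A :=
  if Nat.even m then a (Nat.div2 m) else b (Nat.div2 m).
Lemma sel_e {A} (a b : nat -> A) m : sel a b (2 * m) = a m.
Proof. unfold sel. rewrite Nat.even_even, Nat.div2_even. auto. Qed.
Lemma sel_o {A} (a b : nat -> A) m : sel a b (2 * m + 1) = b m.
Proof. unfold sel. rewrite Nat.even_odd, Nat.div2_odd'. auto. Qed.

Fixpoint decf (fuel n : nat) : list nat :=
  match fuel with 0 => nil | S f => match n with 0 => nil | S m => p1 m :: decf f (p2 m) end end.
Definition dec (n : nat) := decf n n.
Fixpoint code (E : list nat) : nat :=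
  match E with nil => 0 | a :: E => S (pr a (code E)) end.
Lemma decf_code E fuel : code E <= fuel -> decf fuel (code E) = E.
Proof.
  revert fuel. induction E as [|a E IH]; intros fuel H.
  - destruct fuel; auto.
  - destruct fuel as [|f]; simpl in H. lia. simpl. rewrite p1_pr, p2_pr, IH; auto.
    pose proof (Cantor.to_nat_non_decreasing a (code E)). unfold pr in H. lia.
Qed.
Lemma dec_code E : dec (code E) = E.
Proof. apply decf_code; auto. Qed.

Lemma so_basic W y : scott_open W ->
  (W y <-> exists n, upF (dec n) y /\ forall z, upF (dec n) z -> W z).
Proof.
  intro HW. split.
  - intro Hy. destruct (HW y Hy) as [F [HF1 HF2]]. exists (code F). rewrite dec_code. auto.
  - intros [n [H1 H2]]. auto.
Qed.

Section Ref.
Variable X : Type.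
Variable opn : (X -> Prop) -> Prop.
Variable f : X -> Pomega.
Variable S : Pomega -> Prop.
Hypothesis Hinj : forall x y, f x = f y -> x = y.
Hypothesis HS : Pi02 scott_open S.
Hypothesis Himg : forall y, S y <-> exists x, f x = y.
Hypothesis Hopn : forall U, opn U <-> exists W, scott_open W /\ forall x, U x <-> W (f x).
Variable R : nat -> nat -> Prop.
Hypothesis HR : nat_wellorder R.

Lemma Hop : OPS opn.
Proof.
  split; [|split; [|split; [|split]]].
  - intros U V HU HV. apply Hopn in HU as [W1 [H1 H1']]. apply Hopn in HV as [W2 [H2 H2']].
    apply Hopn. exists (fun y => W1 y /\ W2 y). split. apply so_ops; auto.
    intro x. rewrite H1', H2'. tauto.
  - intros U HU. apply Hopn.
    assert (H : forall n, exists W, scott_open W /\ forall x, U n x <-> W (f x)).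
    { intro n. apply Hopn, HU. }
    apply choice_nat in H as [W HW]. exists (fun y => exists n, W n y). split.
    apply so_ops. intro; apply HW.
    intro x. split; intros [n Hn]; exists n; apply HW; auto.
  - apply Hopn. exists (fun _ => True). split. apply so_ops. tauto.
  - apply Hopn. exists (fun _ => False). split. apply so_ops. tauto.
  - intros U V H HU. apply Hopn in HU as [W [H1 H2]]. apply Hopn. exists W. split; auto.
    intro x. rewrite <- H2. symmetry; auto.
Qed.

Definition hG (G : nat -> X -> Prop) (x : X) : Pomega := sel (f x) (fun n => G n x).
Lemma hG_e G x m : hG G x (2 * m) = f x m.
Proof. unfold hG. apply sel_e. Qed.
Lemma hG_o G x m : hG G x (2 * m + 1) = G m x.
Proof. unfold hG. apply (sel_o (f x) (fun n => G n x)). Qed.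

Lemma hG_eq G x y : (forall m, f x m <-> y (2 * m)) -> (forall n, G n x <-> y (2 * n + 1)) ->
  hG G x = y.
Proof.
  intros H1 H2. apply pred_ext. intro m. destruct (parity m) as [[k ->]|[k ->]].
  - rewrite hG_e. auto.
  - rewrite hG_o. auto.
Qed.

Definition QP G := Pi02 scott_open (fun y => exists x, hG G x = y).
Definition hopen G (C : X -> Prop) := exists W, scott_open W /\ forall x, C x <-> W (hG G x).

Lemma f_ev G x : f x = (fun m => hG G x (2 * m)).
Proof. apply pred_ext. intro m. rewrite hG_e. tauto. Qed.

Definition G0 : nat -> X -> Prop := fun _ _ => False.

Lemma QP_base : QP G0.
Proof.
  unfold QP. apply pi2_ext with (fun y => S (fun m => y (2 * m)) /\ forall n, ~ y (2 * n + 1)).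
  - intro y. split.
    + intros [HSy Hn]. apply Himg in HSy as [x Hx]. exists x. apply hG_eq.
      * intro m. rewrite Hx. tauto.
      * intro n. unfold G0. split; [tauto|apply Hn].
    + intros [x <-]. split.
      * apply Himg. exists x. apply f_ev.
      * intro n. rewrite hG_o. auto.
  - apply pi2_and. apply (pi2_reidx (fun m => 2 * m)); auto.
    apply pi2_all. intro n. unfold Pi02.
    apply s2_ext with (fun y : Pomega => y (2 * n + 1)). intro; tauto.
    apply (s2_open _ so_ops). apply so_atom.
Qed.

Definition mrg (G H : nat -> X -> Prop) : nat -> X -> Prop := sel G H.
Definition rg (m : nat) := if Nat.even m then m else 2 * (2 * Nat.div2 m) + 1.
Lemma rg_e m : rg (2 * m) = 2 * m.
Proof. unfold rg. rewrite Nat.even_even. auto. Qed.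
Lemma rg_o m : rg (2 * m + 1) = 2 * (2 * m) + 1.
Proof. unfold rg. rewrite Nat.even_odd, Nat.div2_odd'. auto. Qed.

Lemma hG_mrg_r G H x : (fun m => hG (mrg G H) x (rg m)) = hG G x.
Proof.
  apply pred_ext. intro m. destruct (parity m) as [[k ->]|[k ->]].
  - rewrite rg_e, !hG_e. tauto.
  - rewrite rg_o, !hG_o. unfold mrg. rewrite sel_e. tauto.
Qed.

Definition Dl02 G (C : X -> Prop) :=
  (exists Z, Sigma02 scott_open Z /\ forall x, C x <-> Z (hG G x)) /\
  (exists Z, Sigma02 scott_open Z /\ forall x, ~ C x <-> Z (hG G x)).

Lemma QP_add G H : QP G -> (forall n, Dl02 G (H n)) -> QP (mrg G H).
Proof.
  intros HG HH.
  assert (HH' : forall n, exists ZZ : (Pomega -> Prop) * (Pomega -> Prop),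
    (Sigma02 scott_open (fst ZZ) /\ forall x, H n x <-> fst ZZ (hG G x)) /\
    (Sigma02 scott_open (snd ZZ) /\ forall x, ~ H n x <-> snd ZZ (hG G x))).
  { intro n. destruct (HH n) as [[Z1 H1] [Z2 H2]]. exists (Z1, Z2). auto. }
  apply choice_nat in HH' as [ZZ HZ].
  unfold QP. apply pi2_ext with (fun y => (exists x, hG G x = (fun m => y (rg m))) /\
     forall n, ~ (y (2 * (2 * n + 1) + 1) /\ snd (ZZ n) (fun m => y (rg m))) /\
               ~ (~ y (2 * (2 * n + 1) + 1) /\ fst (ZZ n) (fun m => y (rg m)))).
  - intro y. split.
    + intros [[x Hx] Hn]. exists x. apply hG_eq.
      * intro m. pose proof (f_equal (fun z => z (2 * m)) Hx) as E. cbv beta in E.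
        rewrite rg_e, hG_e in E. rewrite E. tauto.
      * intro n. destruct (parity n) as [[k ->]|[k ->]].
        -- unfold mrg. rewrite sel_e.
           pose proof (f_equal (fun z => z (2 * k + 1)) Hx) as E. cbv beta in E.
           rewrite rg_o, hG_o in E. rewrite E. tauto.
        -- unfold mrg. rewrite sel_o. destruct (Hn k) as [N1 N2].
           destruct (HZ k) as [[_ A1] [_ A2]]. rewrite <- Hx in N1, N2.
           rewrite <- A1 in N2. rewrite <- A2 in N1. tauto.
    + intros [x <-]. split.
      * exists x. symmetry. apply hG_mrg_r.
      * intro n. rewrite hG_mrg_r. rewrite hG_o. unfold mrg. rewrite sel_o.
        destruct (HZ n) as [[_ A1] [_ A2]]. rewrite <- A1, <- A2. tauto.
  - apply pi2_and. apply (pi2_reidx rg (fun z => exists x, hG G x = z)); auto.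
    apply pi2_all. intro n. apply pi2_and.
    + unfold Pi02. apply s2_ext with (fun y : Pomega => snd (ZZ n) (fun m => y (rg m)) /\ y (2 * (2 * n + 1) + 1)).
      intro; tauto. apply (s2_and_open _ so_ops). apply s2_reidx. apply HZ. apply so_atom.
    + unfold Pi02. apply s2_ext with (fun y : Pomega => fst (ZZ n) (fun m => y (rg m)) /\ ~ y (2 * (2 * n + 1) + 1)).
      intro; tauto. apply (s2_and_nopen _ so_ops). apply s2_reidx. apply HZ. apply so_atom.
Qed.

Definition uni (Gs : nat -> nat -> X -> Prop) : nat -> X -> Prop := fun n => Gs (p1 n) (p2 n).
Definition rj (j m : nat) := if Nat.even m then m else 2 * (pr j (Nat.div2 m)) + 1.
Lemma rj_e j m : rj j (2 * m) = 2 * m.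
Proof. unfold rj. rewrite Nat.even_even. auto. Qed.
Lemma rj_o j m : rj j (2 * m + 1) = 2 * pr j m + 1.
Proof. unfold rj. rewrite Nat.even_odd, Nat.div2_odd'. auto. Qed.

Lemma hG_uni_r Gs j x : (fun m => hG (uni Gs) x (rj j m)) = hG (Gs j) x.
Proof.
  apply pred_ext. intro m. destruct (parity m) as [[k ->]|[k ->]].
  - rewrite rj_e, !hG_e. tauto.
  - rewrite rj_o, !hG_o. unfold uni. rewrite p1_pr, p2_pr. tauto.
Qed.

Lemma QP_uni Gs : (forall j, QP (Gs j)) -> QP (uni Gs).
Proof.
  intro HG. unfold QP.
  apply pi2_ext with (fun y => forall j, exists x, hG (Gs j) x = (fun m => y (rj j m))).
  - intro y. split.
    + intro Hj. destruct (Hj 0) as [x0 Hx0]. exists x0. apply hG_eq.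
      * intro m. pose proof (f_equal (fun z => z (2 * m)) Hx0) as E. cbv beta in E.
        rewrite rj_e, hG_e in E. rewrite E. tauto.
      * intro n. destruct (Hj (p1 n)) as [xj Hxj].
        assert (xj = x0).
        { apply Hinj. apply pred_ext. intro m.
          pose proof (f_equal (fun z => z (2 * m)) Hx0) as E. cbv beta in E.
          pose proof (f_equal (fun z => z (2 * m)) Hxj) as E'. cbv beta in E'.
          rewrite rj_e, hG_e in E, E'. rewrite E, E'. tauto. }
        subst xj. pose proof (f_equal (fun z => z (2 * p2 n + 1)) Hxj) as E. cbv beta in E.
        rewrite rj_o, hG_o, pr_p in E. unfold uni. rewrite E. tauto.
    + intros [x <-] j. exists x. symmetry. apply hG_uni_r.
  - apply pi2_all. intro j. apply (pi2_reidx (rj j) (fun z => exists x, hG (Gs j) x = z)). apply HG.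
Qed.

Lemma hopen_uni Gs j C : hopen (Gs j) C -> hopen (uni Gs) C.
Proof.
  intros [W [HW HC]]. exists (fun y => W (fun m => y (rj j m))). split.
  apply so_reidx; auto. intro x. rewrite hG_uni_r. auto.
Qed.

Lemma hopen_mrg G H C : hopen G C -> hopen (mrg G H) C.
Proof.
  intros [W [HW HC]]. exists (fun y => W (fun m => y (rg m))). split.
  apply so_reidx; auto. intro x. rewrite hG_mrg_r. auto.
Qed.

Lemma hopen_mem G n : hopen G (G n).
Proof.
  exists (fun y => y (2 * n + 1)). split. apply so_atom. intro x. rewrite hG_o. tauto.
Qed.

Lemma hopen_f G U : opn U -> hopen G U.
Proof.
  intro HU. apply Hopn in HU as [W [HW HU]].
  exists (fun y => W (fun m => y (2 * m))). split. apply so_reidx; auto.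
  intro x. rewrite HU, (f_ev G x). tauto.
Qed.

Lemma hopen_Dl G C : hopen G C -> Dl02 G (fun x => ~ C x).
Proof.
  intros [W [HW HC]]. split.
  - exists (fun y => ~ W y). split. apply (s2_copen _ so_ops). auto.
    intro x. rewrite HC. tauto.
  - exists W. split. apply (s2_open _ so_ops). auto.
    intro x. rewrite HC. tauto.
Qed.

Lemma hopen_ext G C D : (forall x, C x <-> D x) -> hopen G C -> hopen G D.
Proof. intros H [W [HW HC]]. exists W. split; auto. intro x. rewrite <- H. auto. Qed.

Lemma hopen_ex G (C : nat -> X -> Prop) : (forall n, hopen G (C n)) -> hopen G (fun x => exists n, C n x).
Proof.
  intro H. apply choice_nat in H as [W HW]. exists (fun y => exists n, W n y). split.
  apply so_ops. intro; apply HW.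
  intro x. split; intros [n Hn]; exists n; apply HW; auto.
Qed.

Lemma hopen_and G C D : hopen G C -> hopen G D -> hopen G (fun x => C x /\ D x).
Proof.
  intros [W [HW HC]] [W' [HW' HD]]. exists (fun y => W y /\ W' y). split.
  apply so_ops; auto. intro x. rewrite HC, HD. tauto.
Qed.

Notation Sg := (Sigma0 opn R).

Lemma refine : forall th (C : nat -> X -> Prop), (forall j, Sg th (C j)) ->
  exists G, QP G /\ (forall n, Sg th (G n)) /\ forall j, hopen G (C j).
Proof.
  intro th. induction th as [th IH] using (well_founded_ind (R_wf R HR)).
  intros C HC. destruct (lvl_cases R th) as [Hth|[Hth|[Hth|Hth]]].
  - exists G0. split; [apply QP_base|split].
    + intro n. apply Sigma0_zero; auto.
    + intro j. apply hopen_ext with (fun _ => False).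
      * intro x. split; [tauto|]. apply (inv0 X opn R th (C j)); auto.
      * exists (fun _ => False). split. apply so_ops. tauto.
  - exists G0. split; [apply QP_base|split].
    + intro n. apply Sigma0_one; auto. apply op_empty, Hop.
    + intro j. apply hopen_f. eapply inv1; eauto.
  - assert (H : forall j, exists UV : (nat -> X -> Prop) * (nat -> X -> Prop),
      (forall m, opn (fst UV m)) /\ (forall m, opn (snd UV m)) /\
      (forall x, C j x <-> exists m, fst UV m x /\ ~ snd UV m x)).
    { intro j. destruct (inv2 X opn R th (C j) Hth (HC j)) as [U [V HH]]. exists (U, V). exact HH. }
    apply choice_nat in H as [UV HUV].
    set (H := fun n x => ~ snd (UV (p1 n)) (p2 n) x).
    exists (mrg G0 H). split; [|split].
    + apply QP_add. apply QP_base. intro n. apply hopen_Dl. apply hopen_f. apply HUV.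
    + intro n. destruct (parity n) as [[k ->]|[k ->]]; unfold mrg; [rewrite sel_e|rewrite sel_o].
      * apply Sigma0_two; auto. apply s2_empty, Hop.
      * apply Sigma0_two; auto. apply s2_copen. apply Hop. apply HUV.
    + intro j. apply hopen_ext with (fun x => exists m, fst (UV j) m x /\ H (pr j m) x).
      * intro x. rewrite (proj2 (proj2 (HUV j))). unfold H.
        split; intros [m Hm]; exists m; rewrite ?p1_pr, ?p2_pr in *; auto.
      * apply hopen_ex. intro m. apply hopen_and.
        -- apply hopen_f. apply HUV.
        -- apply hopen_ext with (mrg G0 H (2 * (pr j m) + 1)).
           intro x; unfold mrg; rewrite sel_o; tauto. apply hopen_mem.
  - assert (H : forall j, exists B : nat -> X -> Prop,
      (forall n, exists b, R b th /\ Sg b (B n)) /\ (forall x, C j x <-> exists n, ~ B n x)).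
    { intro j. apply invg; auto. }
    apply choice_nat in H as [B HB].
    set (Bf := fun p => B (p1 p) (p2 p)).
    assert (Hb : forall p, exists b, R b th /\ Sg b (Bf p)).
    { intro p. apply HB. }
    apply choice_nat in Hb as [b Hb].
    assert (HG : forall p, exists G, QP G /\ (forall n, Sg (b p) (G n)) /\ hopen G (Bf p)).
    { intro p. destruct (IH (b p) (proj1 (Hb p)) (fun _ => Bf p)) as [G [H1 [H2 H3]]]; [intro; apply Hb|].
      exists G; split; [exact H1|split; [exact H2|exact (H3 0)]]. }
    apply choice_nat in HG as [Gs HGs].
    set (G1 := uni Gs). set (H := fun p x => ~ Bf p x).
    exists (mrg G1 H). split; [|split].
    + apply QP_add. apply QP_uni. intro; apply HGs.
      intro p. apply hopen_Dl. apply (hopen_uni Gs p). apply HGs.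
    + intro n. destruct (parity n) as [[k ->]|[k ->]]; unfold mrg; [rewrite sel_e|rewrite sel_o].
      * unfold G1, uni. apply (sg_mono X opn Hop R HR (b (p1 k))). apply Hb. apply HGs.
      * unfold H. apply (sg_compl X opn Hop R HR (b k)); apply Hb.
    + intro j. apply hopen_ext with (fun x => exists n, H (pr j n) x).
      * intro x. unfold H, Bf. rewrite (proj2 (HB j)). split; intros [n Hn]; exists n;
        rewrite ?p1_pr, ?p2_pr in *; auto.
      * apply hopen_ex. intro n.
        apply hopen_ext with (mrg G1 H (2 * (pr j n) + 1)).
        intro x; unfold mrg; rewrite sel_o; tauto. apply hopen_mem.
Qed.

Lemma sg_pre th G W : ~ ord_is0 R th -> (forall n, Sg th (G n)) -> scott_open W ->
  Sg th (fun x => W (hG G x)).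
Proof.
  intros Hth HG HW.
  assert (Hup : forall E, Sg th (fun x => upF E (hG G x))).
  { induction E as [|a E IH].
    - apply sg_ext with (fun _ => True). intro x; split; auto. intros _ n [].
      apply sg_full; auto. apply Hop.
    - apply sg_ext with (fun x => hG G x a /\ upF E (hG G x)).
      + intro x. unfold upF. simpl. split.
        * intros [H1 H2] n [<-|Hn]; auto.
        * intro H; split; auto.
      + apply sg_and; auto. apply Hop.
        destruct (parity a) as [[k ->]|[k ->]].
        * apply sg_ext with (fun x => f x k). intro x. rewrite hG_e. tauto.
          apply sg_open; auto. apply Hop. apply Hopn. exists (fun y => y k). split.
          apply so_atom. tauto.
        * apply sg_ext with (G k). intro x. rewrite hG_o. tauto. auto. }
  apply sg_ext with (fun x => exists n, upF (dec n) (hG G x) /\ forall z, upF (dec n) z -> W z).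
  - intro x. symmetry. apply so_basic; auto.
  - apply sg_ex. apply Hop. intro n. destruct (classic (forall z, upF (dec n) z -> W z)) as [H|H].
    + apply sg_ext with (fun x => upF (dec n) (hG G x)). intro; tauto. auto.
    + apply sg_ext with (fun _ => False). intro; tauto. apply sg_empty. apply Hop. auto.
Qed.

End Ref.


Definition sub (E F : list nat) := forall a, In a E -> In a F.

Lemma upF_app E F y : upF (E ++ F) y <-> upF E y /\ upF F y.
Proof.
  unfold upF. split.
  - intro H. split; intros n Hn; apply H; apply in_or_app; auto.
  - intros [H1 H2] n Hn. apply in_app_or in Hn as [Hn|Hn]; auto.
Qed.

Lemma upF_sub E F y : sub E F -> upF F y -> upF E y.
Proof. unfold sub, upF. auto. Qed.

Lemma so_wit W y : scott_open W -> W y -> exists F, upF F y /\ forall z, upF F z -> W z.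
Proof. intros HW Hy. destruct (HW y Hy) as [F [H1 H2]]. exists F. auto. Qed.

Section Baire.
Variables P Q U V : nat -> Pomega -> Prop.
Variable O : Pomega -> Prop.
Hypothesis HP : forall m, scott_open (P m).
Hypothesis HQ : forall m, scott_open (Q m).
Hypothesis HU : forall m, scott_open (U m).
Hypothesis HV : forall m, scott_open (V m).
Hypothesis HO : scott_open O.

Definition GG (y : Pomega) := (forall m, P m y -> Q m y) /\ ~ O y.

Lemma qwit y j : exists F, upF F y /\ forall m, m <= j -> Q m y -> forall x, upF F x -> Q m x.
Proof.
  induction j as [|j IH].
  - destruct (classic (Q 0 y)) as [H|H].
    + destruct (so_wit _ _ (HQ 0) H) as [F [H1 H2]]. exists F. split; auto.
      intros m Hm. assert (m = 0) by lia. subst. auto.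
    + exists nil. split. intros n []. intros m Hm Hq. assert (m = 0) by lia. subst. tauto.
  - destruct IH as [F [H1 H2]].
    destruct (classic (Q (S j) y)) as [H|H].
    + destruct (so_wit _ _ (HQ (S j)) H) as [F' [H1' H2']]. exists (F ++ F'). split.
      apply upF_app; auto.
      intros m Hm Hq x Hx. apply upF_app in Hx as [Hx1 Hx2].
      destruct (Nat.eq_dec m (S j)) as [->|Hne]; auto. apply (H2 m); auto. lia.
    + exists F. split; auto. intros m Hm Hq x Hx.
      destruct (Nat.eq_dec m (S j)) as [->|Hne]. tauto. apply (H2 m); auto. lia.
Qed.

Definition inv (E : list nat) := exists y, GG y /\ upF E y.

Lemma baire : (exists y, GG y) -> (forall y, GG y -> exists n, U n y /\ ~ V n y) ->
  exists E n, inv E /\ forall y, GG y -> upF E y -> U n y /\ ~ V n y.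
Proof.
  intros Hne Hcov. apply NNPP. intro NC.
  assert (NC' : forall E n, inv E -> exists z, GG z /\ upF E z /\ ~ (U n z /\ ~ V n z)).
  { intros E n HE. apply NNPP. intro H. apply NC. exists E, n. split; auto.
    intros y Hy HyE. apply NNPP. intro H'. apply H. exists y. auto. }
  assert (step : forall (E : list nat) j, inv E -> exists E', inv E' /\ sub E E' /\
    (forall m, m <= j -> (forall z, upF E z -> P m z) -> forall x, upF E' x -> Q m x) /\
    (forall x, GG x -> upF E' x -> U j x -> V j x)).
  { intros E j [y [Gy Ey]].
    destruct (qwit y j) as [F [HF1 HF2]].
    set (E1 := E ++ F).
    assert (Qp : forall E', sub E1 E' -> forall m, m <= j -> (forall z, upF E z -> P m z) ->
       forall x, upF E' x -> Q m x).
    { intros E' HE' m Hm HPm x Hx. apply (HF2 m Hm).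
      - apply Gy. apply HPm; auto.
      - apply (upF_sub F E'). intros a Ha. apply HE'. apply in_or_app; auto. auto. }
    destruct (classic (exists y', GG y' /\ upF E1 y' /\ U j y')) as [[y' [Gy' [E1y' Uy']]]|Hno].
    - destruct (so_wit _ _ (HU j) Uy') as [Fu [Fu1 Fu2]].
      set (E2 := E1 ++ Fu).
      destruct (NC' E2 j) as [z [Gz [E2z Nz]]].
      { exists y'. split; auto. apply upF_app; auto. }
      assert (Uz : U j z). { apply Fu2. apply upF_app in E2z. tauto. }
      assert (Vz : V j z). { apply NNPP. intro. apply Nz. auto. }
      destruct (so_wit _ _ (HV j) Vz) as [Fv [Fv1 Fv2]].
      exists (E2 ++ Fv). split; [|split; [|split]].
      + exists z. split; auto. apply upF_app; auto.
      + intros a Ha. unfold E2, E1. rewrite <- !app_assoc. apply in_or_app; auto.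
      + apply Qp. intros a Ha. unfold E2. rewrite <- app_assoc. apply in_or_app; auto.
      + intros x Gx Hx Ux. apply Fv2. apply upF_app in Hx. tauto.
    - exists E1. split; [|split; [|split]].
      + exists y. split; auto. apply upF_app; auto.
      + intros a Ha. apply in_or_app; auto.
      + apply Qp. intros a Ha; auto.
      + intros x Gx Hx Ux. exfalso. apply Hno. eauto. }
  set (st := {E : list nat | inv E}).
  assert (Hnx : forall js : nat * st, exists s' : st, sub (proj1_sig (snd js)) (proj1_sig s') /\
    (forall m, m <= fst js -> (forall z, upF (proj1_sig (snd js)) z -> P m z) ->
      forall x, upF (proj1_sig s') x -> Q m x) /\
    (forall x, GG x -> upF (proj1_sig s') x -> U (fst js) x -> V (fst js) x)).
  { intros [j [E HE]]. destruct (step E j HE) as [E' [H1 H2]]. exists (exist _ E' H1). exact H2. }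
  apply choice_gen in Hnx as [nx Hnx].
  assert (s0 : st). { exists nil. destruct Hne as [y Hy]. exists y. split; auto. intros n []. }
  pose (sq := nat_rec (fun _ => st) s0 (fun n s => nx (n, s))).
  pose (Es := fun n => proj1_sig (sq n)).
  assert (Hinv : forall n, inv (Es n)). { intro n. exact (proj2_sig (sq n)). }
  assert (Hst : forall n, sub (Es n) (Es (S n)) /\
    (forall m, m <= n -> (forall z, upF (Es n) z -> P m z) -> forall x, upF (Es (S n)) x -> Q m x) /\
    (forall x, GG x -> upF (Es (S n)) x -> U n x -> V n x)).
  { intro n. exact (Hnx (n, sq n)). }
  assert (Hmono : forall n m, n <= m -> sub (Es n) (Es m)).
  { intros n m Hnm. induction Hnm. intros a Ha; auto.
    intros a Ha. apply (proj1 (Hst m)). auto. }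
  set (x := fun a => exists n, In a (Es n)).
  assert (Hx : forall n, upF (Es n) x). { intros n a Ha. exists n; auto. }
  assert (Hfin : forall F, upF F x -> exists N, sub F (Es N)).
  { induction F as [|a F IH].
    - intros _. exists 0. intros b [].
    - intros H. destruct (H a (or_introl eq_refl)) as [n1 Hn1].
      destruct IH as [n2 Hn2]. intros b Hb. apply H. right; auto.
      exists (n1 + n2). intros b [<-|Hb].
      + apply (Hmono n1). lia. auto.
      + apply (Hmono n2). lia. auto. }
  assert (Gx : GG x).
  { split.
    - intros m Pm. destruct (so_wit _ _ (HP m) Pm) as [F [F1 F2]].
      destruct (Hfin F F1) as [N HN].
      apply (proj1 (proj2 (Hst (N + m))) m). lia.
      + intros z Hz. apply F2. apply (upF_sub F (Es (N + m))); auto.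
        intros a Ha. apply (Hmono N). lia. auto.
      + apply Hx.
    - intro Ox. destruct (so_wit _ _ HO Ox) as [F [F1 F2]].
      destruct (Hfin F F1) as [N HN]. destruct (Hinv N) as [y [Gy Ey]].
      apply Gy. apply F2. apply (upF_sub F (Es N)); auto. }
  destruct (Hcov x Gx) as [n [Un NVn]]. apply NVn.
  apply (proj2 (proj2 (Hst n))); auto.
Qed.

End Baire.


Definition GF (k : nat) (le : nat -> nat -> Prop) (c : nat -> nat) : Prop :=
  (forall p, le p p) /\ (forall p q, le p q -> le q p -> p = q) /\
  (forall p q r, le p q -> le q r -> le p r) /\
  well_founded (fun q p => le q p /\ q <> p) /\
  (forall p, exists l, forall q, le p q -> In q l) /\
  (forall x y z, le x y -> le x z -> le y z \/ le z y) /\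
  (forall p, c p < k).

Lemma wf_min_gen {T : Type} (r : T -> T -> Prop) (Hw : well_founded r) (Q : T -> Prop) :
  (exists x, Q x) -> exists c, Q c /\ forall d, r d c -> ~ Q d.
Proof.
  intros [x Hx]. revert Hx. induction x as [x IH] using (well_founded_ind Hw).
  intro Hx. destruct (classic (exists d, r d x /\ Q d)) as [[d [Hd1 Hd2]]|Hn].
  - exact (IH d Hd1 Hd2).
  - exists x. split; auto. intros d Hd HQ. apply Hn; eauto.
Qed.

Lemma GF_kf k le c : GF k le c -> countable_kforest k nat le c.
Proof.
  intros (Hr & Ha & Ht & Hw & Hup & Hch & Hc).
  split; [|split; [|split; [|split; [|split; [|split]]]]]; auto.
  - exists (fun p => p). auto.
  - intros C HC. destruct (classic (exists p, C p)) as [Hne|Hne].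
    + destruct (wf_min_gen _ Hw C Hne) as [m [Cm Hm]].
      destruct (Hup m) as [l Hl]. exists l. intros p Cp. apply Hl.
      destruct (HC m p Cm Cp) as [H|H]; auto.
      destruct (Nat.eq_dec p m) as [->|Hpm]. apply Hr. exfalso. apply (Hm p); auto.
    + exists nil. intros p Cp. apply Hne; eauto.
Qed.

Record FD := mkFD { fle : nat -> nat -> Prop; fc : nat -> nat; fW : nat -> Pomega -> Prop }.

Definition Good k (d : FD) := GF k (fle d) (fc d) /\ forall p, scott_open (fW d p).

Definition emptyF : FD := mkFD (fun p q => p = q) (fun _ => 0) (fun _ _ => False).

Lemma emptyF_good k : 0 < k -> Good k emptyF.
Proof.
  intro Hk. split.
  - split; [|split; [|split; [|split; [|split; [|split]]]]]; simpl; intros; subst; auto.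
    + intro p. constructor. intros q [H1 H2]. simpl in *. congruence.
    + exists (p :: nil). intros q ->. left; auto.
  - intros p y []. 
Qed.

Definition unionF (ds : nat -> FD) (Vs : nat -> Pomega -> Prop) : FD :=
  mkFD (fun n m => p1 n = p1 m /\ fle (ds (p1 n)) (p2 n) (p2 m))
       (fun n => fc (ds (p1 n)) (p2 n))
       (fun n y => fW (ds (p1 n)) (p2 n) y /\ Vs (p1 n) y).

Lemma unionF_good k ds Vs : (forall j, Good k (ds j)) -> (forall j, scott_open (Vs j)) ->
  Good k (unionF ds Vs).
Proof.
  intros Hd HV. split.
  - split; [|split; [|split; [|split; [|split; [|split]]]]]; simpl.
    + intro p. split; auto. apply (Hd (p1 p)).
    + intros p q [E1 H1] [E2 H2]. rewrite <- (pr_p p), <- (pr_p q). rewrite E1 in *.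
      f_equal. apply (Hd (p1 q)); auto.
    + intros p q r [E1 H1] [E2 H2]. split. congruence. rewrite E1 in H1 |- *.
      apply (proj1 (proj2 (proj2 (proj1 (Hd (p1 q)))))) with (p2 q); auto.
    + intro n. rewrite <- (pr_p n). generalize (p2 n). generalize (p1 n). intros j p.
      pose proof (proj1 (proj2 (proj2 (proj2 (proj1 (Hd j)))))) as Hw.
      induction p as [p IH] using (well_founded_ind Hw).
      constructor. intros m [[E1 H1] Hne]. rewrite p1_pr in E1. rewrite <- (pr_p m).
      rewrite E1. apply IH. rewrite p2_pr, E1 in H1. split; auto.
      intro He. apply Hne. rewrite <- (pr_p m), E1, He. auto.
    + intro n. destruct (proj1 (proj2 (proj2 (proj2 (proj2 (proj1 (Hd (p1 n)))))))(p2 n)) as [l Hl].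
      exists (map (pr (p1 n)) l). intros q [E H]. rewrite <- (pr_p q), <- E.
      apply in_map. auto.
    + intros x y z [E1 H1] [E2 H2].
      destruct (proj1 (proj2 (proj2 (proj2 (proj2 (proj2 (proj1 (Hd (p1 x)))))))) _ _ _ H1 H2)
        as [H|H]; [left|right]; (split; [congruence|]).
      * rewrite <- E1. exact H.
      * rewrite <- E2. exact H.
    + intro n. apply (Hd (p1 n)).
  - intro p. simpl. apply (proj1 so_ops). apply Hd. apply HV.
Qed.

Definition rootF (d : FD) (U : Pomega -> Prop) (i : nat) : FD :=
  mkFD (fun a b => match b with 0 => True | S b' => match a with 0 => False | S a' => fle d a' b' end end)
       (fun p => match p with 0 => i | S p => fc d p end)
       (fun p => match p with 0 => U | S p => fW d p end).

Lemma rootF_good k d U i : Good k d -> scott_open U -> i < k -> Good k (rootF d U i).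
Proof.
  intros [(Hr & Ha & Ht & Hw & Hup & Hch & Hc) Ho] HU Hi. split.
  - split; [|split; [|split; [|split; [|split; [|split]]]]]; simpl.
    + intros [|p]; auto.
    + intros [|p] [|q]; simpl; try tauto. intros; f_equal; auto.
    + intros [|p] [|q] [|r]; simpl; try tauto. eauto.
    + assert (Hs : forall p, Acc (fun q p => fle (rootF d U i) q p /\ q <> p) (S p)).
      { intro p. induction p as [p IH] using (well_founded_ind Hw).
        constructor. intros [|q] [H1 H2]; simpl in H1. tauto.
        apply IH. split; auto. }
      intros [|p]; auto. constructor. intros [|q] [H1 H2]. congruence. auto.
    + intros [|p]. exists (0 :: nil). intros [|q]; simpl; tauto.
      destruct (Hup p) as [l Hl]. exists (0 :: map S l). intros [|q] Hq. left; auto.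
      right. apply in_map. auto.
    + intros [|x] [|y] [|z]; simpl; try tauto. eauto.
    + intros [|p]; auto.
  - intros [|p]; simpl; auto.
Qed.

Section HK.
Variable X : Type.
Variable h : X -> Pomega.
Variable k : nat.
Variable A : X -> nat.

Definition Rep (d : FD) (Z : Pomega -> Prop) : Prop :=
  forall x, Z (h x) -> (exists p, fW d p (h x)) /\
    forall p, fW d p (h x) -> (forall q, fle d q p -> q <> p -> ~ fW d q (h x)) -> fc d p = A x.

Lemma Rep_mono d Z Z' : Rep d Z -> (forall y, Z' y -> Z y) -> Rep d Z'.
Proof. intros H1 H2 x Hx. apply H1. auto. Qed.

Lemma unionF_rep ds Vs : (forall j, Rep (ds j) (Vs j)) -> Rep (unionF ds Vs) (fun y => exists j, Vs j y).
Proof.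
  intros Hd x [j Hj]. split.
  - destruct (Hd j x Hj) as [[p Hp] _]. exists (pr j p). simpl. rewrite p1_pr, p2_pr. auto.
  - intros n [Hn1 Hn2] Hmin. simpl. apply (Hd (p1 n) x Hn2); auto.
    intros q Hq Hne Hw. apply (Hmin (pr (p1 n) q)).
    + simpl. rewrite p1_pr, p2_pr. auto.
    + intro E. apply Hne. rewrite <- E, p2_pr. auto.
    + simpl. rewrite p1_pr, p2_pr. auto.
Qed.

Lemma rootF_rep d Z U i : Rep d Z -> (forall p y, fW d p y -> Z y) ->
  (forall x, U (h x) -> ~ Z (h x) -> A x = i) -> Rep (rootF d U i) U.
Proof.
  intros Hd HZ Hi x Hx. split.
  - exists 0. auto.
  - intros [|p] Hp Hmin; simpl in *.
    + destruct (classic (Z (h x))) as [Hz|Hz].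
      * exfalso. destruct (Hd x Hz) as [[p Hp'] _]. apply (Hmin (S p)); simpl; auto.
      * symmetry; auto.
    + apply (Hd x). eauto. auto. intros q Hq Hne. apply (Hmin (S q)); simpl; auto.
Qed.

Variables P Q : nat -> Pomega -> Prop.
Hypothesis HP : forall m, scott_open (P m).
Hypothesis HQ : forall m, scott_open (Q m).
Hypothesis Himg : forall y, (exists x, h x = y) <-> forall m, P m y -> Q m y.
Hypothesis Hk : 0 < k.
Hypothesis HA : forall x, A x < k.
Variables UU VV : nat -> nat -> Pomega -> Prop.
Hypothesis HUU : forall i n, scott_open (UU i n).
Hypothesis HVV : forall i n, scott_open (VV i n).
Hypothesis Hcls : forall i x, i < k -> (A x = i <-> exists n, UU i n (h x) /\ ~ VV i n (h x)).

Lemma so_cand (Pr : Prop) W : scott_open W -> scott_open (fun y => Pr /\ W y).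
Proof.
  intro HW. destruct (classic Pr) as [H|H].
  - apply (proj2 (proj2 (proj2 (proj2 so_ops)))) with W; auto. intro; tauto.
  - apply (proj2 (proj2 (proj2 (proj2 so_ops)))) with (fun _ => False). intro; tauto.
    apply so_ops.
Qed.

Theorem HKthm : exists d, Good k d /\ Rep d (fun _ => True).
Proof.
  set (Rp := fun E => exists d, Good k d /\ Rep d (upF E)).
  assert (Hds : forall j, exists d, Good k d /\ (Rp (dec j) -> Rep d (upF (dec j)))).
  { intro j. destruct (classic (Rp (dec j))) as [[d [H1 H2]]|H].
    - exists d. auto.
    - exists emptyF. split. apply emptyF_good; auto. tauto. }
  apply choice_nat in Hds as [ds Hds].
  set (Vs := fun j y => Rp (dec j) /\ upF (dec j) y).
  set (Wst := fun y => exists j, Vs j y).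
  assert (HVs : forall j, scott_open (Vs j)). { intro j. apply so_cand. apply so_upF. }
  assert (Hug : Good k (unionF ds Vs)). { apply unionF_good; auto. intro; apply Hds. }
  assert (Hur : Rep (unionF ds Vs) Wst).
  { apply unionF_rep. intro j. intros x [Hr Hx]. apply (proj2 (Hds j)); auto. }
  assert (Hall : forall x, Wst (h x)).
  { apply NNPP. intro Hn. apply not_all_ex_not in Hn as [x0 Hx0].
    assert (HO : scott_open Wst). { apply so_ops. auto. }
    destruct (baire P Q (fun n y => p1 n < k /\ UU (p1 n) (p2 n) y) (fun n => VV (p1 n) (p2 n)) Wst HP HQ
      (fun n => so_cand _ _ (HUU _ _)) (fun n => HVV _ _) HO) as [E [n [[y0 [Gy0 Ey0]] HE]]].
    - exists (h x0). split; auto. apply Himg. eauto.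
    - intros y [Gy _]. apply Himg in Gy as [x <-].
      destruct (proj1 (Hcls (A x) x (HA x)) eq_refl) as [m Hm].
      exists (pr (A x) m). rewrite p1_pr, p2_pr. split; [split; auto|]; apply Hm.
    - set (i := p1 n).
      assert (Hi : forall x, upF E (h x) -> ~ Wst (h x) -> A x = i).
      { intros x HEx HW. assert (Gx : GG P Q Wst (h x)). { split; auto. apply Himg. eauto. }
        destruct (HE _ Gx HEx) as [[H0 H1] H2].
        apply Hcls; auto. exists (p2 n). auto. }
      assert (Hik : i < k). { destruct (HE _ Gy0 Ey0) as [[H0 _] _]. auto. }
      assert (HRE : Rp E).
      { exists (rootF (unionF ds Vs) (upF E) i). split.
        - apply rootF_good; auto. apply so_upF.
        - apply rootF_rep with Wst; auto.
          intros p y [_ Hy]. exists (p1 p). auto. }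
      apply Gy0. exists (code E). unfold Vs. rewrite dec_code. auto. }
  exists (unionF ds Vs). split; auto. intros x _. apply Hur. apply Hall.
Qed.

End HK.


Lemma succ_levels R (HR : nat_wellorder R) th th1 : ~ ord_is0 R th -> ord_succ R th th1 ->
  (ord_is1 R th /\ ord_is2 R th1) \/ ord_gt2 R th1.
Proof.
  intros H0 [Hs Hs2]. destruct (not0_pred R th H0) as [b Hb].
  assert (Hbt : b <> th). { intro; subst. eapply R_irr; eauto. }
  destruct (classic (exists c, R c th1 /\ c <> th /\ c <> b)) as [[c [Hc1 [Hc2 Hc3]]]|Hn].
  - right. exists th, b, c. repeat split; auto. eapply R_tr; eauto.
  - left. split.
    + exists b. split; auto. intros c Hc. apply NNPP. intro Hcb. apply Hn. exists c.
      repeat split; auto. eapply R_tr; eauto. intro; subst; eapply R_irr; eauto.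
    + exists th, b. repeat split; auto. eapply R_tr; eauto.
      intros c Hc. destruct (classic (c = th)); auto. destruct (classic (c = b)); auto.
      exfalso; apply Hn; eauto.
Qed.

Section Main.
Variable X : Type.
Variable opn : (X -> Prop) -> Prop.
Variable f : X -> Pomega.
Variable S : Pomega -> Prop.
Hypothesis Hinj : forall x y, f x = f y -> x = y.
Hypothesis HS : Pi02 scott_open S.
Hypothesis Himg : forall y, S y <-> exists x, f x = y.
Hypothesis Hopn : forall U, opn U <-> exists W, scott_open W /\ forall x, U x <-> W (f x).
Variable R : nat -> nat -> Prop.
Hypothesis HR : nat_wellorder R.
Variables th th1 k : nat.
Hypothesis Hk : 2 <= k.
Hypothesis Hth : ~ ord_is0 R th.
Hypothesis Hsucc : ord_succ R th th1.

Notation Sg := (Sigma0 opn R).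
Let Hop := Hop X opn f Hopn.

Lemma decomp (A : X -> nat) i : Sg th1 (fun x => A x = i) ->
  exists U V : nat -> X -> Prop, (forall n, Sg th (U n)) /\ (forall n, Sg th (V n)) /\
    forall x, A x = i <-> exists n, U n x /\ ~ V n x.
Proof.
  intro HA. destruct (succ_levels R HR th th1 Hth Hsucc) as [[H1 H2]|H2].
  - destruct (inv2 X opn R th1 _ H2 HA) as [U [V [HU [HV HAe]]]].
    exists U, V. split; [|split]; auto.
    + intro n. apply sg_open; auto.
    + intro n. apply sg_open; auto.
  - destruct (invg X opn R th1 _ H2 HA) as [B [HB HAe]].
    exists (fun _ _ => True), B. split; [|split].
    + intro; apply sg_full; auto.
    + intro n. destruct (HB n) as [b [Hb HBb]]. apply (sg_le X opn Hop R HR b); auto.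
      destruct (proj2 Hsucc b Hb); auto.
    + intro x. rewrite HAe. split; intros [n Hn]; exists n; tauto.
Qed.

Lemma dir2 (A : X -> nat) : Delta0_k opn R th1 k A ->
  exists (le : nat -> nat -> Prop) (c : nat -> nat),
    countable_kforest k nat le c /\ Sigma0_forest opn R th k nat le c A.
Proof.
  intros [Hkp HD].
  assert (Hdc : forall i, exists UV : (nat -> X -> Prop) * (nat -> X -> Prop),
    (forall n, Sg th (fst UV n)) /\ (forall n, Sg th (snd UV n)) /\
    (i < k -> forall x, A x = i <-> exists n, fst UV n x /\ ~ snd UV n x)).
  { intro i. destruct (Nat.lt_ge_cases i k) as [Hi|Hi].
    - destruct (decomp A i (proj1 (HD i Hi))) as [U [V HH]]. exists (U, V). simpl. tauto.
    - exists (fun _ _ => False, fun _ _ => False). simpl. split; [|split].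
      + intro; apply sg_empty; auto.
      + intro; apply sg_empty; auto.
      + intro; lia. }
  apply choice_nat in Hdc as [UV HUV].
  set (C := sel (fun p => fst (UV (p1 p)) (p2 p)) (fun p => snd (UV (p1 p)) (p2 p))).
  assert (HC : forall j, Sg th (C j)).
  { intro j. unfold C. destruct (parity j) as [[m ->]|[m ->]]; [rewrite sel_e|rewrite sel_o];
    apply HUV. }
  destruct (refine X opn f S Hinj HS Himg Hopn R HR th C HC) as [G [HQP [HGm HGo]]].
  apply choice_nat in HGo as [W HW].
  unfold QP in HQP. destruct HQP as [P [Q [HP [HQ HPQ]]]].
  assert (Himg' : forall y, (exists x, hG X f G x = y) <-> forall m, P m y -> Q m y).
  { intro y. split.
    - intros Hy m Pm. apply NNPP. intro Qm. apply (proj2 (HPQ y)); eauto.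
    - intro H. apply NNPP. intro Hn. apply HPQ in Hn as [m [Pm Qm]]. auto. }
  destruct (HKthm X (hG X f G) k A P Q HP HQ Himg' ltac:(lia) Hkp
     (fun i n => W (2 * pr i n)) (fun i n => W (2 * pr i n + 1))) as [d [[HGF HWo] HRep]].
  { intros; apply HW. }
  { intros; apply HW. }
  { intros i x Hi. rewrite (proj2 (proj2 (HUV i)) Hi).
    split; intros [n Hn]; exists n.
    - rewrite <- !(proj2 (HW _)). unfold C. rewrite sel_e, sel_o, !p1_pr, !p2_pr. auto.
    - rewrite <- !(proj2 (HW _)) in Hn. unfold C in Hn. rewrite sel_e, sel_o, !p1_pr, !p2_pr in Hn. auto. }
  exists (fle d), (fc d). split. apply GF_kf; auto.
  split; auto. exists (fun p x => fW d p (hG X f G x)). split; [|split].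
  - intro p. apply sg_pre; auto.
  - intro x. apply (HRep x I).
  - intros i Hi x. split.
    + intro HAx. destruct (HRep x I) as [[p0 Hp0] Hlab].
      destruct (wf_min_gen _ (proj1 (proj2 (proj2 (proj2 HGF))))
         (fun p => fW d p (hG X f G x)) (ex_intro _ p0 Hp0)) as [p [Hp Hmin]].
      exists p. split; [|split].
      * rewrite <- HAx. apply Hlab; auto.
      * exact Hp.
      * intros q Hq Hne. apply Hmin. auto.
    + intros [p [Hcp [Hp Hmin]]]. rewrite <- Hcp. symmetry. apply (HRep x I); auto.
Qed.

Lemma dir1 (A : X -> nat) (P : Type) (le : P -> P -> Prop) (c : P -> nat) :
  countable_kforest k P le c -> Sigma0_forest opn R th k P le c A -> Delta0_k opn R th1 k A.
Proof.
  intros HF [Hkp [B [HB [Hcov Hiff]]]].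
  destruct HF as (_ & _ & _ & [e He] & _).
  assert (Hth1 : R th th1) by apply Hsucc.
  assert (HD : forall p, Sg th (fun x => exists q, le q p /\ q <> p /\ B q x)).
  { intro p. apply sg_ext with (fun x => exists m, exists q, e q = m /\ le q p /\ q <> p /\ B q x).
    - intro x. split. intros [m [q Hq]]. exists q. tauto. intros [q Hq]. exists (e q), q. tauto.
    - apply sg_ex; auto. intro m.
      destruct (classic (exists q, e q = m /\ le q p /\ q <> p)) as [[q [Hq1 [Hq2 Hq3]]]|Hn].
      + apply sg_ext with (B q); auto. intro x. split.
        * intro; exists q; auto.
        * intros [q' [E' [_ [_ Hb]]]]. replace q with q'; auto. apply He. congruence.
      + apply sg_ext with (fun _ => False). intro x. split; [tauto|]. intros [q Hq]. apply Hn.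
        exists q; tauto. apply sg_empty; auto. }
  assert (Hcl : forall i, Sg th1 (fun x => exists p, c p = i /\ B p x /\ forall q, le q p -> q <> p -> ~ B q x)).
  { intro i. apply sg_ext with (fun x => exists n, exists p, e p = n /\ c p = i /\ B p x /\
      ~ exists q, le q p /\ q <> p /\ B q x).
    - intro x. split.
      + intros [n [p Hp]]. exists p. split; [tauto|split; [tauto|]]. intros q Hq Hne Hbq.
        apply (proj2 (proj2 (proj2 Hp))). eauto.
      + intros [p Hp]. exists (e p), p. split; [auto|split; [tauto|split; [tauto|]]].
        intros [q Hq]. apply (proj2 (proj2 Hp) q); tauto.
    - apply sg_ex; auto. intro n.
      destruct (classic (exists p, e p = n /\ c p = i)) as [[p [Hp1 Hp2]]|Hn].
      + apply sg_ext with (fun x => B p x /\ ~ exists q, le q p /\ q <> p /\ B q x).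
        * intro x. split.
          -- intro H. exists p. tauto.
          -- intros [p' [E' Hp']]. replace p with p'. tauto. apply He. congruence.
        * apply sg_and; auto. apply (sg_mono X opn Hop R HR th); auto.
          apply (sg_compl X opn Hop R HR th); auto.
      + apply sg_ext with (fun _ => False). intro x. split; [tauto|]. intros [p Hp]. apply Hn.
        exists p; tauto. apply sg_empty; auto. }
  split; auto. intros i Hi. split.
  - apply sg_ext with (fun x => exists p, c p = i /\ B p x /\ forall q, le q p -> q <> p -> ~ B q x).
    intro x. symmetry. apply Hiff; auto. auto.
  - apply sg_ext with (fun x => exists j, j < k /\ j <> i /\ A x = j).
    + intro x. split.
      * intros [j [_ [Hj E]]]. congruence.
      * intro H. exists (A x). split; auto.
    + apply sg_ex; auto. intro j. destruct (classic (j < k /\ j <> i)) as [[Hj1 Hj2]|Hn].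
      * apply sg_ext with (fun x => exists p, c p = j /\ B p x /\ forall q, le q p -> q <> p -> ~ B q x).
        intro x. rewrite <- Hiff; auto. tauto. auto.
      * apply sg_ext with (fun _ => False). intro x. split; [tauto|]. intros [H1 [H2 _]]. tauto.
        apply sg_empty; auto.
Qed.

End Main.

Theorem theorem4p15 :
  forall (k : nat), 2 <= k ->
  forall (X : Type) (opn : (X -> Prop) -> Prop), quasi_polish opn ->
  forall (R : nat -> nat -> Prop) (theta theta1 : nat),
    nat_wellorder R ->
    ~ ord_is0 R theta ->            (* theta >= 1 *)
    ord_succ R theta theta1 ->      (* theta1 = theta + 1 *)
  forall (A : X -> nat),
    (exists (P : Type) (le : P -> P -> Prop) (c : P -> nat),
        countable_kforest k P le c /\ Sigma0_forest opn R theta k P le c A)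
    <-> Delta0_k opn R theta1 k A.
Proof.
  intros k Hk X opn Hqp R th th1 HR Hth Hsucc A.
  destruct Hqp as [S [f [HS [HSf [Hinj [Hsurj Hopn]]]]]].
  assert (Himg : forall y, S y <-> exists x, f x = y).
  { intro y. split; auto. intros [x <-]. auto. }
  split.
  - intros [P [le [c [HF HSF]]]]. eapply dir1; eauto.
  - intro HD. destruct (dir2 X opn f S Hinj HS Himg Hopn R HR th th1 k Hk Hth Hsucc A HD)
      as [le [c H]]. exists nat, le, c. exact H.
Qed.
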